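(* Let $G$ be an $X-Y$ normalized graph, let $S \subseteq N(X)$, and assume that no vertex of $S$ is adjacent to a vertex of $Y$. Let $K_1$ be an important $X-Y$ separator of $G$ disjoint with $S$ and let $K(S)$ be the important witness of $S$. Then $K_1 \geq K(S)$.
   Context: $G$ is a finite undirected graph and $X,Y$ are disjoint subsets of $V(G)$; $N(C)=(\bigcup_{v\in C}N(v))\setminus C$. An $X-Y$ separator is a set $K \subseteq V(G) \setminus (X \cup Y)$ such that $G \setminus K$ has no path from $X$ to $Y$; minimal means inclusion-minimal. $G$ is $X-Y$ normalized if $N(X)$ is the only minimum-cardinality $X-Y$ separator. Let $r$ be the minimum size of an $X-Y$ separator; the excess of an $X-Y$ separator $K$ is $|K|-r$. For $S\subseteq N(X)$, the cover excess $CE(S)$ is the excess of a smallest $X-Y$ separator disjoint with $S$. An $X-Y$ separator $K$ with $K\cap S=\emptyset$ and excess $CE(S)$ is a witness of $S$. $NR(G,Y,K)$ is the set of vertices not reachable from $Y$ in $G\setminus K$; $K \geq K'$ means $NR(G,Y,K)\supseteq NR(G,Y,K')$, and $K'<K$ means $K\geq K'$ and $NR(G,Y,K)\ne NR(G,Y,K')$. A minimal $X-Y$ separator $K$ is important if there is no $X-Y$ separator $K'$ with $K<K'$ and $|K|\geq|K'|$. An important witness of $S$ is a witness of $S$ that is an important $X-Y$ separator; under the hypotheses it exists and is unique, denoted $K(S)$. *)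

(* Defs.v *)
From mathcomp Require Import all_boot.
Set Implicit Arguments. Unset Strict Implicit. Unset Printing Implicit Defensive.

(* A finite simple undirected graph: vertex type V : finType, adjacency e
   (assumed symmetric and irreflexive in the theorem). *)
Section Sep.
Variables (V : finType) (e : rel V) (X Y : {set V}).

Definition nbh (C : {set V}) : {set V} :=
  [set v | [exists u in C, e u v]] :\: C.

Definition edge_avoid (K : {set V}) : rel V :=
  [rel u v | [&& e u v, u \notin K & v \notin K]].

Definition reach (K : {set V}) (u v : V) : bool :=
  (u \notin K) && connect (edge_avoid K) u v.

Definition separator (K : {set V}) : bool :=
  (K :&: (X :|: Y) == set0) &&
  [forall x in X, forall y in Y, ~~ reach K x y].

Definition minimal_separator (K : {set V}) : bool :=
  separator K && [forall K' : {set V}, (K' \proper K) ==> ~~ separator K'].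

Definition min_sep_size : nat :=
  \big[minn/#|V|]_(K : {set V} | separator K) #|K|.

Definition excess (K : {set V}) : nat := #|K| - min_sep_size.

Definition normalized : bool :=
  separator (nbh X) && (#|nbh X| == min_sep_size) &&
  [forall K : {set V}, (separator K && (#|K| == min_sep_size)) ==> (K == nbh X)].

Definition cover_excess (S : {set V}) : nat :=
  \big[minn/#|V|]_(K : {set V} | separator K && [disjoint K & S]) excess K.

Definition witness (S K : {set V}) : bool :=
  [&& separator K, [disjoint K & S] & excess K == cover_excess S].

Definition NR (K : {set V}) : {set V} :=
  [set v | ~~ [exists y in Y, reach K y v]].

Definition sep_ge (K K' : {set V}) : bool := NR K' \subset NR K.
Definition sep_lt (K' K : {set V}) : bool := sep_ge K K' && (NR K != NR K').

Definition important (K : {set V}) : bool :=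
  minimal_separator K &&
  ~~ [exists K' : {set V}, [&& separator K', sep_lt K K' & #|K'| <= #|K|]].

Definition important_witness (S K : {set V}) : bool :=
  witness S K && important K.
End Sep.

(* Main.v *)
Require Import Defs.
From mathcomp Require Import all_boot.
Set Implicit Arguments. Unset Strict Implicit.

Lemma disjUl (T : finType) (A B C : {set T}) :
  [disjoint A :|: B & C] = [disjoint A & C] && [disjoint B & C].
Proof. by rewrite !disjoints_subset subUset. Qed.

Section Help.
Variables (V : finType) (e : rel V) (X Y : {set V}).
Hypothesis sym : symmetric e.

Definition Rs (K : {set V}) : {set V} := [set v | [exists y in Y, reach e K y v]].

Lemma inNR K v : (v \in NR e Y K) = (v \notin Rs K).
Proof. by rewrite !inE. Qed.

Lemma ea_sym K : connect_sym (edge_avoid e K).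
Proof.
apply: sym_connect_sym => u v; rewrite /edge_avoid /= sym.
by case: (v \in K); case: (u \in K); rewrite ?andbF ?andbT.
Qed.

Lemma conn_notin {K u v} : connect (edge_avoid e K) u v -> u \notin K -> v \notin K.
Proof.
move=> c uK.
have cl : closed (edge_avoid e K) [pred w | w \notin K].
  apply: intro_closed; first exact: ea_sym.
  by move=> x y /and3P[_ _ yK] _; rewrite inE.
by have := closed_connect cl c; rewrite !inE => <-.
Qed.

Lemma reach_sym {K u v} : reach e K u v -> reach e K v u.
Proof.
case/andP=> uK c; apply/andP; split; first exact: conn_notin c uK.
by rewrite ea_sym.
Qed.

Lemma Y_Rs K : separator e X Y K -> Y \subset Rs K.
Proof.
case/andP=> /eqP dis _; apply/subsetP => y yY; rewrite inE.
apply/existsP; exists y; rewrite yY /= /reach connect0 andbT.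
apply/negP => yK.
have : y \in K :&: (X :|: Y) by rewrite !inE yK yY orbT.
by rewrite dis inE.
Qed.

Lemma X_Rs K x : separator e X Y K -> x \in X -> x \notin Rs K.
Proof.
case/andP=> _ /forallP H xX; rewrite inE; apply/negP => /existsP[y /andP[yY r]].
have := H x; rewrite xX /= => /forallP /(_ y); rewrite yY /=.
by rewrite (reach_sym r).
Qed.

Lemma nbh_Rs K : nbh e (Rs K) \subset K.
Proof.
apply/subsetP => v; rewrite !inE => /andP[vR /existsP[u /andP[uR euv]]].
apply/negPn/negP => vK; move/negP: vR; apply.
move: uR; rewrite inE => /existsP[y /andP[yY /andP[yK c]]].
apply/existsP; exists y; rewrite yY /= /reach yK /=.
have uK := conn_notin c yK.
apply: connect_trans c (connect1 _).
by rewrite /edge_avoid /= euv vK uK.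
Qed.

Lemma Rs_nbh {C : {set V}} : Y \subset C -> Rs (nbh e C) \subset C.
Proof.
move=> YC; apply/subsetP => v; rewrite inE => /existsP[y /andP[yY /andP[yK c]]].
have cl : closed (edge_avoid e (nbh e C)) [pred w | w \in C].
  apply: intro_closed; first exact: ea_sym.
  move=> a b /= /and3P[eab aN bN] aC; apply/negPn/negP => bC.
  move/negP: bN; apply; rewrite !inE bC /=; apply/existsP; exists a; by rewrite aC.
by have := closed_connect cl c; rewrite !inE => <-; rewrite (subsetP YC).
Qed.

Lemma sep_nbh (C : {set V}) : Y \subset C -> [disjoint C & X] -> [disjoint nbh e C & X] ->
  separator e X Y (nbh e C).
Proof.
move=> YC CX NX; apply/andP; split.
  apply/eqP/setP => v; rewrite !inE; apply/negP => /andP[vN /orP[vX|vY]].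
    by move: (disjointFl NX vX); rewrite !inE vN.
  by rewrite (subsetP YC _ vY) in vN.
apply/forallP => x; apply/implyP => xX; apply/forallP => y; apply/implyP => yY.
apply/negP => /reach_sym r.
have : x \in Rs (nbh e C) by rewrite inE; apply/existsP; exists y; rewrite yY.
by move/(subsetP (Rs_nbh YC)) => xC; move: (disjointFl CX xX); rewrite xC.
Qed.

Lemma submod (A B : {set V}) :
  #|nbh e (A :&: B)| + #|nbh e (A :|: B)| <= #|nbh e A| + #|nbh e B|.
Proof.
rewrite -cardsUI -[#|nbh e A| + _]cardsUI leq_add //; apply: subset_leq_card;
  apply/subsetP => v; rewrite !inE.
- case/orP=> /andP[vC /existsP[u /andP[uC euv]]].
    move: uC vC; rewrite !inE => /andP[uA uB].
    case vA: (v \in A) => /=.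
      by move=> vB; rewrite vB /=; apply/existsP; exists u; rewrite uB.
    by move=> _; apply/orP; left; apply/existsP; exists u; rewrite uA.
  move: uC vC; rewrite !inE negb_or => /orP[uA|uB] /andP[vA vB].
    by rewrite vA /=; apply/orP; left; apply/existsP; exists u; rewrite uA.
  by rewrite vB /=; apply/orP; right; apply/existsP; exists u; rewrite uB.
- case/and3P=> /andP[_ /existsP[u /andP[uC euv]]] vD _.
  move: uC vD; rewrite !inE negb_or => /andP[uA uB] /andP[vA vB].
  by rewrite vA vB /=; apply/andP; split; apply/existsP; exists u; rewrite ?uA ?uB.
Qed.

Lemma bigmin_le (P : pred {set V}) (F : {set V} -> nat) n K :
  P K -> \big[minn/n]_(K' | P K') F K' <= F K.
Proof.
move=> PK; have : K \in index_enum {set V} by rewrite mem_index_enum.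
elim: (index_enum _) => [|a r IH] //; rewrite inE big_cons => /orP[/eqP <-|Kr].
  by rewrite PK geq_minl.
by case: (P a); [apply: leq_trans (geq_minr _ _) (IH Kr)|exact: IH].
Qed.

Lemma nbhI_sub (A B : {set V}) : nbh e (A :&: B) \subset nbh e A :|: nbh e B.
Proof.
  apply/subsetP => v; rewrite !inE => /andP[vC /existsP[u /andP[uC euv]]].
  move: uC vC; rewrite !inE => /andP[uA uB].
  case vA: (v \in A) => /=.
    by move=> vB; rewrite vB /=; apply/existsP; exists u; rewrite uB.
  by move=> _; apply/orP; left; apply/existsP; exists u; rewrite uA.
Qed.

Lemma nbhU_sub (A B : {set V}) : nbh e (A :|: B) \subset nbh e A :|: nbh e B.
Proof.
  apply/subsetP => v; rewrite !inE => /andP[vC /existsP[u /andP[uC euv]]].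
  move: uC vC; rewrite !inE negb_or => /orP[uA|uB] /andP[vA vB].
    by rewrite vA /=; apply/orP; left; apply/existsP; exists u; rewrite uA.
  by rewrite vB /=; apply/orP; right; apply/existsP; exists u; rewrite uB.
Qed.

End Help.

Theorem lemma3 (V : finType) (e : rel V) (X Y : {set V}) :
  symmetric e -> irreflexive e -> [disjoint X & Y] ->
  normalized e X Y ->
  forall (S : {set V}), S \subset nbh e X ->
  (forall s y, s \in S -> y \in Y -> ~~ e s y) ->
  forall K1 KS : {set V},
  important e X Y K1 -> [disjoint K1 & S] ->
  important_witness e X Y S KS ->
  sep_ge e Y K1 KS.
Proof.
move=> sym _ _ _ S _ _ K1 KS /andP[/andP[sep1 _] noK] dis1
  /andP[/and3P[sepS disS /eqP exS] _].
apply/idPn => H.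
set A := Rs e Y K1; set B := Rs e Y KS.
have YA : Y \subset A by exact: Y_Rs sep1.
have YB : Y \subset B by exact: Y_Rs sepS.
have nA := nbh_Rs Y sym K1; have nB := nbh_Rs Y sym KS.
have YI : Y \subset A :&: B by rewrite subsetI YA YB.
have disX : forall K, separator e X Y K -> [disjoint K & X].
  move=> K /andP[/eqP d _]; rewrite disjoint_sym disjoint_subset; apply/subsetP => x xX.
  rewrite inE; apply/negP => xK.
  have : x \in K :&: (X :|: Y) by rewrite !inE xK xX.
  by rewrite d inE.
have AX : [disjoint A & X].
  by rewrite disjoint_sym disjoint_subset; apply/subsetP => x xX; rewrite inE (X_Rs sym sep1 xX).
have BX : [disjoint B & X].
  by rewrite disjoint_sym disjoint_subset; apply/subsetP => x xX; rewrite inE (X_Rs sym sepS xX).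
have nU : forall C, nbh e C \subset nbh e A :|: nbh e B -> [disjoint nbh e C & X].
  move=> C sub; apply: disjointWl sub _.
  rewrite disjUl; apply/andP; split; apply: disjointWl; [exact: nA| |exact: nB|];
  exact: disX.
have sI := nbhI_sub e A B.
have sU := nbhU_sub e A B.
have sepI : separator e X Y (nbh e (A :&: B)).
  apply: (sep_nbh sym YI); [apply: disjointWl AX; apply: subsetIl | exact: nU].
have sepU : separator e X Y (nbh e (A :|: B)).
  apply: (sep_nbh sym (subset_trans YA (subsetUl _ _))); [by rewrite disjUl AX BX | exact: nU].
have [v vNS vA] : exists2 v, v \in NR e Y KS & v \notin NR e Y K1.
  by move/subsetPn: H => [v ? ?]; exists v.
have ltI : sep_lt e Y K1 (nbh e (A :&: B)).
  apply/andP; split.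
    apply/subsetP => w; rewrite !inNR => wA; apply/negP => /(subsetP (Rs_nbh sym YI)).
    by rewrite inE (negbTE wA).
  apply/negP => /eqP eqN; move: vA; rewrite -eqN inNR negbK.
  move/(subsetP (Rs_nbh sym YI)).
  by rewrite inE; move: vNS; rewrite inNR => /negbTE ->; rewrite andbF.
have big1 : #|K1| < #|nbh e (A :&: B)|.
  rewrite ltnNge; apply/negP => le; move/negP: noK; apply.
  by apply/existsP; exists (nbh e (A :&: B)); rewrite sepI ltI le.
have sm := submod e A B.
have lA := subset_leq_card nA; have lB := subset_leq_card nB.
have ltU : #|nbh e (A :|: B)| < #|KS|.
  have : #|nbh e (A :&: B)| + #|nbh e (A :|: B)| < #|nbh e (A :&: B)| + #|KS|.
    apply: (leq_ltn_trans sm); rewrite -addSn leq_add //.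
    exact: leq_ltn_trans lA big1.
  by rewrite ltn_add2l.
have dU : [disjoint nbh e (A :|: B) & S].
  apply: disjointWl sU _; rewrite disjUl; apply/andP; split;
  apply: disjointWl; [exact: nA|exact: dis1|exact: nB|exact: disS].
have ce : cover_excess e X Y S <= excess e X Y (nbh e (A :|: B)).
  by rewrite /cover_excess; apply: bigmin_le; rewrite sepU dU.
have rU : min_sep_size e X Y <= #|nbh e (A :|: B)|.
  by rewrite /min_sep_size; apply: bigmin_le.
move: ce; rewrite -exS /excess; apply/negP; rewrite -ltnNge.
by rewrite ltn_sub2r // (leq_ltn_trans rU ltU).
Qed.
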